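(* Consider the pairing urn model: an urn initially contains $k=k(n)$ red balls and $n-k$ white balls; at each step one red ball is removed and then a second ball is chosen uniformly at random among the balls remaining in the urn and removed; the process continues until no red ball is left. Let $R_i$ be the number of red balls removed during the first $i$ steps and $T:=\inf\{i\ge0:(k-R_i)/(n-2i)<1/2\}$. If $k(n)=X_0n+o_{\mathbb{P}}(n)$ for some $0<X_0<1$, then with high probability $T<n/2$.
   Context: ''With high probability'' means with probability $1-o(1)$ as $n\to\infty$; $X_n=o_{\mathbb{P}}(n)$ means $X_n/n\to0$ in probability. *)

(* Defs.v *)
From Stdlib Require Import Reals.
Open Scope R_scope.

(* State (after i steps): m = n - 2i balls remain, of
   which r are red.  One step (only possible when r >= 1 and m >= 2):
   a red ball is removed, then a second ball is chosen uniformly among the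
   m - 1 remaining balls and removed; it is red with probability
   (r-1)/(m-1) (new state (r-2, m-2)) and white with probability
   (m-r)/(m-1) (new state (r-1, m-2)).

   [hitp m r] is the probability, starting from state (r red, m total) at
   some time i with m = n - 2i, that the process reaches (at the current
   or a later step i' of the process, necessarily with n - 2i' > 0) a state
   with r'/m' < 1/2, i.e. 2 r' < m'.  A state with m = 0 corresponds to i = n/2,
   which is not < n/2.  A state (r,m) = (1,1) cannot hit and the process
   cannot make a further full step with i < n/2. *)
Fixpoint hitp (m : nat) (r : nat) : R :=
  match m with
  | O => 0
  | S m1 =>
      if Nat.ltb (2 * r) (S m1) then 1
      else match m1 with
           | O => 0
           | S m2 =>
               ((INR r - 1) / INR (S m2)) * hitp m2 (r - 2)
               + ((INR (S (S m2)) - INR r) / INR (S m2)) * hitp m2 (r - 1)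
           end
  end.

Definition urn_T_lt_half (n k : nat) : R := hitp n k.

(* Mass that the law mu_n of k(n) (a distribution on {0,...,n}) puts on
   { k : |k - X0 n| > eps n }. *)
Definition dev_mass (mu : nat -> nat -> R) (X0 eps : R) (n : nat) : R :=
  sum_f_R0 (fun k => if Rlt_dec (eps * INR n) (Rabs (INR k - X0 * INR n))
                     then mu n k else 0) n.

(* Main.v *)
Require Import Defs.
From Stdlib Require Import Reals Lra Lia.
Open Scope R_scope.

Lemma hitp_hit m2 r : (2 * r < S (S m2))%nat -> hitp (S (S m2)) r = 1.
Proof. intros H. cbn [hitp]. apply Nat.ltb_lt in H. rewrite H. reflexivity. Qed.

Lemma hitp_step m2 r : (S (S m2) <= 2 * r)%nat ->
  hitp (S (S m2)) r = ((INR r - 1) / INR (S m2)) * hitp m2 (r - 2)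
     + ((INR (S (S m2)) - INR r) / INR (S m2)) * hitp m2 (r - 1).
Proof. intros H. cbn [hitp]. apply Nat.ltb_ge in H. rewrite H. reflexivity. Qed.

Lemma hitp_bounds : forall N m r, (m <= N)%nat -> (r <= m)%nat -> 0 <= hitp m r <= 1.
Proof.
  induction N as [|N IH]; intros m r Hm Hr.
  - assert (m = 0%nat) by lia. subst. simpl. lra.
  - destruct m as [|[|m2]].
    + simpl; lra.
    + simpl. destruct (Nat.ltb _ _); lra.
    + destruct (Nat.lt_ge_cases (2*r) (S (S m2))) as [Hh|Hh].
      * rewrite hitp_hit by exact Hh. lra.
      * rewrite hitp_step by exact Hh.
        assert (Hr1 : (1 <= r)%nat) by lia.
        assert (Hx : 0 <= INR m2) by apply pos_INR.
        assert (Hy : 1 <= INR r) by (apply (le_INR 1); exact Hr1).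
        assert (Hyx : INR r <= INR m2 + 2) by (apply le_INR in Hr; rewrite !S_INR in Hr; lra).
        rewrite !S_INR.
        set (p := (INR r - 1) / (INR m2 + 1)).
        set (q := (INR m2 + 1 + 1 - INR r) / (INR m2 + 1)).
        assert (Hp : 0 <= p) by (unfold p; apply Rle_mult_inv_pos; lra).
        assert (Hq : 0 <= q) by (unfold q; apply Rle_mult_inv_pos; lra).
        assert (Hpq : p + q = 1) by (unfold p, q; field; lra).
        destruct (IH m2 (r-2)%nat ltac:(lia) ltac:(lia)) as [A1 B1].
        assert (Hq2 : 0 <= q * hitp m2 (r-1) <= q).
        { destruct (Nat.le_gt_cases r (S m2)) as [Hc|Hc].
          - destruct (IH m2 (r-1)%nat ltac:(lia) ltac:(lia)) as [A2 B2]. nra.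
          - assert (r = S (S m2)) by lia. subst r.
            assert (q = 0) by (unfold q; rewrite !S_INR; unfold Rdiv; ring).
            rewrite H. lra. }
        nra.
Qed.

Definition Lq (m r : nat) : R := (INR m - INR r) * (INR m - INR r - 1) / (INR m - 1).

Lemma Lq_zero m r : (r <= m)%nat -> (m <= S r)%nat -> Lq m r = 0.
Proof.
  intros H1 H2. unfold Lq. destruct (Nat.eq_dec m r) as [->|Hne].
  - unfold Rdiv. ring.
  - assert (m = S r) by lia. subst. rewrite S_INR. unfold Rdiv. ring.
Qed.

Lemma key : forall a N m r, (m <= N)%nat -> (r <= m)%nat ->
  (1 - hitp m r) * a^2 <= (Lq m r - a)^2 + INR m.
Proof.
  intros a N. induction N as [|N IH]; intros m r Hm Hr.
  - assert (m = 0%nat) by lia. subst. assert (r = 0%nat) by lia. subst.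
    rewrite Lq_zero by lia. simpl. nra.
  - destruct (Nat.le_gt_cases m (S r)) as [Hs|Hs].
    { rewrite Lq_zero by lia. destruct (hitp_bounds m m r ltac:(lia) Hr).
      assert (0 <= INR m) by apply pos_INR. nra. }
    destruct m as [|[|m2]]; [lia|lia|].
    destruct (Nat.lt_ge_cases (2*r) (S (S m2))) as [Hh|Hh].
    { rewrite hitp_hit by exact Hh. assert (0 <= INR (S (S m2))) by apply pos_INR.
      pose proof (pow2_ge_0 (Lq (S (S m2)) r - a)). rewrite Rminus_diag, Rmult_0_l. lra. }
    rewrite hitp_step by exact Hh.
    assert (Hr2 : (2 <= r)%nat) by lia.
    assert (Hm2 : (2 <= m2)%nat) by lia.
    pose proof (IH m2 (r-2)%nat ltac:(lia) ltac:(lia)) as I1.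
    pose proof (IH m2 (r-1)%nat ltac:(lia) ltac:(lia)) as I2.
    unfold Lq in *.
    rewrite minus_INR in I1, I2 by lia.
    replace (INR 2) with 2 in I1 by (simpl; ring).
    replace (INR 1) with 1 in I2 by reflexivity.
    rewrite !S_INR in *.
    set (x := INR m2) in *. set (y := INR r) in *.
    assert (Hx : 2 <= x) by (unfold x; apply (le_INR 2); exact Hm2).
    assert (Hy : 2 <= y) by (unfold y; apply (le_INR 2); exact Hr2).
    assert (Hyx : y <= x) by (unfold x, y; apply le_INR; lia).
    assert (H2y : x + 2 <= 2 * y).
    { unfold x, y. replace 2 with (INR 2) by (simpl; ring).
      rewrite <- !mult_INR, <- plus_INR. apply le_INR. lia. }
    set (h1 := hitp m2 (r-2)) in *. set (h2 := hitp m2 (r-1)) in *.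
    set (w := x + 2 - y).
    set (p := (y - 1) / (x + 1)).
    set (q := (x + 1 + 1 - y) / (x + 1)).
    set (L1 := (x - (y - 2)) * (x - (y - 2) - 1) / (x - 1)) in *.
    set (L2 := (x - (y - 1)) * (x - (y - 1) - 1) / (x - 1)) in *.
    set (L := (x + 1 + 1 - y) * (x + 1 + 1 - y - 1) / (x + 1 + 1 - 1)).
    assert (Hp : 0 <= p) by (unfold p; apply Rle_mult_inv_pos; lra).
    assert (Hq : 0 <= q) by (unfold q; apply Rle_mult_inv_pos; lra).
    assert (Hpq : p + q = 1) by (unfold p, q; field; lra).
    assert (HL : L = p * L1 + q * L2) by (unfold L, p, q, L1, L2; field; lra).
    assert (HD : L1 - L2 = 2 * ((x + 1 - y) / (x - 1))) by (unfold L1, L2; field; lra).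
    assert (Hz : 0 <= (x + 1 - y) / (x - 1) <= 1).
    { split. apply Rle_mult_inv_pos; lra.
      apply (Rmult_le_reg_r (x - 1)); [lra|]. unfold Rdiv. rewrite Rmult_assoc, Rinv_l by lra. lra. }
    assert (HD2 : (L1 - L2)^2 <= 4).
    { rewrite HD. destruct Hz as [Z1 Z2]. set (z := (x + 1 - y) / (x - 1)) in *.
      replace ((2 * z)^2) with (4 * (z * z)) by ring.
      assert (z * z <= 1 * 1) by (apply Rmult_le_compat; lra). lra. }
    assert (Hpq4 : p * q <= 1/4).
    { replace q with (1 - p) by lra. pose proof (pow2_ge_0 (p - 1/2)). nra. }
    assert (Hid : p * (L1 - a)^2 + q * (L2 - a)^2 = (L - a)^2 + p * q * (L1 - L2)^2).
    { rewrite HL. replace p with (1 - q) by lra. ring. }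
    assert (J1 := Rmult_le_compat_l p _ _ Hp I1).
    assert (J2 := Rmult_le_compat_l q _ _ Hq I2).
    assert (0 <= p * q) by (apply Rmult_le_pos; lra).
    assert (p * q * (L1 - L2)^2 <= 1).
    { pose proof (pow2_ge_0 (L1 - L2)).
      apply Rle_trans with (1/4 * 4); [|lra]. apply Rmult_le_compat; lra. }
    replace ((1 - (p * h1 + q * h2)) * a^2) with (p * ((1 - h1) * a^2) + q * ((1 - h2) * a^2)).
    2:{ replace p with (1 - q) by lra. ring. }
    assert (E : p * ((L1 - a)^2 + x) + q * ((L2 - a)^2 + x) = (L - a)^2 + p*q*(L1-L2)^2 + x).
    { rewrite <- Hid. replace p with (1 - q) by lra. ring. }
    lra.
Qed.

Lemma per_k (X0 c : R) (n k : nat) : c = (1 - X0) / 2 -> 0 < c ->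
  (k <= n)%nat -> 2 < c * INR n ->
  Rabs (INR k - X0 * INR n) <= c * INR n ->
  1 - hitp n k <= 4 / (c^4 * INR n).
Proof.
  intros Hc Hc0 Hk Hcn Hab.
  assert (Hn : 0 < INR n).
  { destruct (Rle_or_lt (INR n) 0) as [H|H]; [|exact H].
    nra. }
  pose proof (key (Lq n k) n n k (le_n n) Hk) as K.
  rewrite Rminus_diag in K. replace ((0:R)^2) with 0 in K by ring. rewrite Rplus_0_l in K.
  set (w := INR n - INR k).
  assert (Hw : c * INR n <= w).
  { unfold w. pose proof (Rle_abs (INR k - X0 * INR n)). rewrite Hc in *. lra. }
  assert (Hn1 : 1 < INR n).
  { assert (0 <= INR k) by apply pos_INR. unfold w in Hw. lra. }
  assert (HL : Lq n k = w * (w - 1) / (INR n - 1)) by reflexivity.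
  assert (HLb : c^2 * INR n / 2 <= Lq n k).
  { rewrite HL. apply (Rmult_le_reg_r (INR n - 1)); [lra|].
    replace (w * (w - 1) / (INR n - 1) * (INR n - 1)) with (w * (w - 1)) by (field; lra).
    assert (c * INR n * (c * INR n / 2) <= w * (w - 1)) by nra.
    nra. }
  set (t := 4 / (c^4 * INR n)).
  assert (Hc4 : 0 < c^4) by (apply pow_lt; lra).
  assert (Ht : t * (c^4 * INR n) = 4) by (unfold t; field; lra).
  destruct (Rle_or_lt (1 - hitp n k) 0) as [H|H].
  { assert (0 < t) by (unfold t; apply Rdiv_lt_0_compat; [lra| apply Rmult_lt_0_compat; lra]). lra. }
  assert (HL2 : (c^2 * INR n / 2)^2 <= (Lq n k)^2).
  { assert (0 <= c^2 * INR n / 2) by (pose proof (pow2_ge_0 c); nra). apply pow_incr; lra. }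
  assert (K2 : (1 - hitp n k) * (c^2 * INR n / 2)^2 <= INR n).
  { apply Rle_trans with ((1 - hitp n k) * (Lq n k)^2); [|exact K].
    apply Rmult_le_compat_l; lra. }
  replace ((c^2 * INR n / 2)^2) with ((c^4 * INR n) * (INR n / 4)) in K2 by (field).
  assert (E : (1 - hitp n k) * (c^4 * INR n) <= 4).
  { apply (Rmult_le_reg_r (INR n / 4)); [lra|]. nra. }
  apply (Rmult_le_reg_r (c^4 * INR n)); [apply Rmult_lt_0_compat; lra|]. lra.
Qed.

Theorem lemma6 (X0 : R) (mu : nat -> nat -> R) :
  0 < X0 < 1 ->
  (forall n k, 0 <= mu n k) ->
  (forall n, sum_f_R0 (mu n) n = 1) ->
  (forall eps, 0 < eps -> Un_cv (dev_mass mu X0 eps) 0) ->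
  Un_cv (fun n => sum_f_R0 (fun k => mu n k * urn_T_lt_half n k) n) 1.
Proof.
  intros HX Hmu Hsum Hdev eps Heps.
  set (c := (1 - X0) / 2).
  assert (Hc : 0 < c) by (unfold c; lra).
  destruct (Hdev c Hc (eps/2) ltac:(lra)) as [N1 HN1].
  assert (Hc4 : 0 < c^4) by (apply pow_lt; lra).
  set (e0 := Rmin (Rmin (c^4 * eps / 8) (c / 2)) (1/2)).
  assert (He0 : 0 < e0).
  { unfold e0. apply Rmin_pos; [apply Rmin_pos|]; try lra.
    apply Rdiv_lt_0_compat; [apply Rmult_lt_0_compat|]; lra. }
  destruct (archimed_cor1 e0 He0) as [N2 [HN2 HN2p]].
  exists (Nat.max N1 N2). intros n Hn.
  assert (HnN2 : (N2 <= n)%nat) by lia.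
  assert (HN2pos : 0 < INR N2) by (apply lt_0_INR; lia).
  assert (HnR : INR N2 <= INR n) by (apply le_INR; lia).
  assert (Hinv : / INR n < e0).
  { apply Rle_lt_trans with (/ INR N2); [apply Rinv_le_contravar; lra|exact HN2]. }
  assert (Hnpos : 0 < INR n) by lra.
  assert (E1 : e0 <= c^4 * eps / 8) by (unfold e0; eapply Rle_trans; [apply Rmin_l|apply Rmin_l]).
  assert (E2 : e0 <= c / 2) by (unfold e0; eapply Rle_trans; [apply Rmin_l|apply Rmin_r]).
  assert (Hcn : 2 < c * INR n).
  { assert (/ INR n * INR n = 1) by (field; lra).
    assert (/ INR n * INR n < c / 2 * INR n) by (apply Rmult_lt_compat_r; lra). lra. }
  set (t := 4 / (c^4 * INR n)).
  assert (Hteps : t < eps / 2).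
  { unfold t. apply (Rmult_lt_reg_r (c^4 * INR n)); [apply Rmult_lt_0_compat; lra|].
    unfold Rdiv. rewrite Rmult_assoc, Rinv_l by (apply Rgt_not_eq, Rmult_lt_0_compat; lra).
    assert (/ INR n * INR n = 1) by (field; lra).
    assert (/ INR n * INR n < c^4 * eps / 8 * INR n) by (apply Rmult_lt_compat_r; lra).
    nra. }
  assert (Ht0 : 0 < t) by (unfold t; apply Rdiv_lt_0_compat; [lra|apply Rmult_lt_0_compat; lra]).
  specialize (HN1 n ltac:(lia)). unfold R_dist in HN1. rewrite Rminus_0_r in HN1.
  set (S := sum_f_R0 (fun k => mu n k * urn_T_lt_half n k) n).
  set (D := dev_mass mu X0 c n) in *.
  assert (Up : S <= 1).
  { rewrite <- (Hsum n). unfold S. apply sum_Rle. intros k Hk.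
    destruct (hitp_bounds n n k (le_n n) Hk). unfold urn_T_lt_half.
    pose proof (Hmu n k). nra. }
  assert (Low : 1 - S <= D + t).
  { rewrite <- (Hsum n). unfold S. rewrite <- minus_sum.
    assert (D + t = sum_f_R0 (fun k => (if Rlt_dec (c * INR n) (Rabs (INR k - X0 * INR n))
                     then mu n k else 0) + mu n k * t) n).
    { rewrite plus_sum, <- scal_sum, Hsum. unfold D, dev_mass. ring. }
    rewrite H. apply sum_Rle. intros k Hk.
    destruct (hitp_bounds n n k (le_n n) Hk). unfold urn_T_lt_half.
    pose proof (Hmu n k).
    destruct (Rlt_dec _ _) as [Hb|Hb].
    - nra.
    - apply Rnot_lt_le in Hb.
      pose proof (per_k X0 c n k eq_refl Hc Hk Hcn Hb). fold t in H3. nra. }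
  apply Rabs_def2 in HN1 as [HD _]. 
  unfold R_dist; fold S. apply Rabs_def1; lra.
Qed.
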